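(* Let $\mathcal{M}_0$ be the set of all probability distributions on $\mathbb{R}$ and $T:\mathcal{M}_0\to\mathcal{M}_0$. (i) $T\circ T^u=T^u\circ T$ for every increasing left-continuous $u:\mathbb{R}\to\mathbb{R}$ if and only if $T=T_d$ for some right-continuous $d\in\widehat{\mathcal{F}_D}$. (ii) $T\circ T_d=T_d\circ T$ for every right-continuous $d\in\widehat{\mathcal{F}_D}$ if and only if $T=T^u$ for some increasing left-continuous $u:\mathbb{R}\to\mathbb{R}$.
   Context: Increasing means non-decreasing. $\widehat{\mathcal{F}_D}$ is the set of increasing functions $d:[0,1]\to[0,1]$ with $d(0)=\lim_{x\downarrow0}d(x)=0$ and $d(1)=\lim_{x\uparrow1}d(x)=1$. For such $d$, $T_d:\mathcal{M}_0\to\mathcal{M}_0$ is $T_d(F)(x)=\lim_{y\downarrow x}d(F(y))$ (distributions identified with cdfs). For increasing $u$, $T^u(F)=F\circ u^{-1}$ is the distribution of $u(X)$ when $X\sim F$. *)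

(* Defs.v *)
(* Distributions on R are identified with cdfs. *)
From HB Require Import structures.
From mathcomp Require Import all_boot all_order all_algebra.
From mathcomp Require Import all_classical all_reals all_analysis.
Set Implicit Arguments. Unset Strict Implicit. Unset Printing Implicit Defensive.
Import Order.TTheory GRing.Theory Num.Theory.
Import numFieldNormedType.Exports.
Local Open Scope classical_set_scope.
Local Open Scope ring_scope.

Section Defs.
Variable R : realType.

Definition is_cdf (F : R -> R) : Prop :=
  {homo F : x y / x <= y} /\
  (forall x : R, F y @[y --> x^'+] --> F x) /\
  (F x @[x --> -oo] --> (0:R)) /\
  (F x @[x --> +oo] --> (1:R)).

Definition incr_leftcont (u : R -> R) : Prop :=
  {homo u : x y / x <= y} /\ (forall x : R, u y @[y --> x^'-] --> u x).

(* d belongs to \hat{F_D}; only the values of d on [0,1] matter. *)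
Definition in_FDhat (d : R -> R) : Prop :=
  {in `[0, 1]&, {homo d : x y / x <= y}} /\
  {in `[0, 1], forall x, d x \in `[0, 1]} /\
  d 0 = 0 /\ (d x @[x --> 0^'+] --> (0:R)) /\
  d 1 = 1 /\ (d x @[x --> 1^'-] --> (1:R)).

Definition rightcont01 (d : R -> R) : Prop :=
  forall x : R, 0 <= x < 1 -> d y @[y --> x^'+] --> d x.

Definition Td (d : R -> R) (F : R -> R) : R -> R :=
  fun x => lim (d (F y) @[y --> x^'+]).

(* T^u(F) = F o u^{-1}: the cdf of u(X) for X ~ F, i.e.
   x |-> P(u(X) <= x) = mu_F({t | u t <= x}).  For increasing u the set
   {t | u t <= x} is a down-set, whose F-probability is the supremum of F
   over it (0 if it is empty). *)
Definition Tu (u : R -> R) (F : R -> R) : R -> R :=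
  fun x => if pselect ([set t | u t <= x] !=set0)
           then sup (F @` [set t | u t <= x]) else 0.

End Defs.

(* Main.v *)
Require Import Defs.
From HB Require Import structures.
From mathcomp Require Import all_boot all_order all_algebra.
From mathcomp Require Import all_classical all_reals all_analysis.
From mathcomp Require Import lra ring.
Import Order.TTheory GRing.Theory Num.Theory.
Import numFieldNormedType.Exports.

Section S.
Set Implicit Arguments. Unset Strict Implicit.
Local Open Scope classical_set_scope.
Local Open Scope ring_scope.
Variable R : realType.
Lemma near_right_ex (x : R) (P : R -> Prop) :
  (\forall y \near x^'+, P y) -> exists2 e : R, 0 < e & forall y, x < y < x + e -> P y.
Proof.
rewrite near_withinE => /nbhs_ballP [e e0 H]; exists e => // y /andP[xy ye].
apply: H => //; rewrite /ball /= ltr0_norm ?subr_lt0 // opprB ltrBlDl //.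
Qed.
Lemma near_left_ex (x : R) (P : R -> Prop) :
  (\forall y \near x^'-, P y) -> exists2 e : R, 0 < e & forall y, x - e < y < x -> P y.
Proof.
rewrite near_withinE => /nbhs_ballP [e e0 H]; exists e => // y /andP[xy ye].
apply: H => //; rewrite /ball /= gtr0_norm ?subr_gt0 // ltrBlDl -ltrBlDr //.
Qed.
Lemma near_pinfty_ex (P : R -> Prop) :
  (\forall y \near +oo, P y) -> exists M : R, forall y, M < y -> P y.
Proof. by move=> [M [_ H]]; exists M. Qed.
Lemma near_ninfty_ex (P : R -> Prop) :
  (\forall y \near -oo, P y) -> exists M : R, forall y, y < M -> P y.
Proof. by move=> [M [_ H]]; exists M. Qed.
End S.

Section S.
Set Implicit Arguments. Unset Strict Implicit.
Local Open Scope classical_set_scope.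
Local Open Scope ring_scope.
Variable R : realType.
Implicit Types F G : R -> R.

Lemma mcdf_mono F x y : is_cdf F -> x <= y -> F x <= F y.
Proof. by move=> [m _] /m. Qed.

Lemma mcdf_lo_abs F e : is_cdf F -> 0 < e -> exists M, forall t, t < M -> `|F t| < e.
Proof.
move=> [_ [_ [h _]]] e0; move: h => /cvgr_dist_lt/(_ _ e0).
move=> /near_ninfty_ex [M HM]; exists M => t /HM; by rewrite sub0r normrN.
Qed.

Lemma mcdf_hi_abs F e : is_cdf F -> 0 < e -> exists M, forall t, M < t -> `|1 - F t| < e.
Proof.
move=> [_ [_ [_ h]]] e0; move: h => /cvgr_dist_lt/(_ _ e0).
by move=> /near_pinfty_ex [M HM]; exists M.
Qed.

Lemma mcdf_ge0 F x : is_cdf F -> 0 <= F x.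
Proof.
move=> hF; rewrite leNgt; apply/negP => Fx0.
have e0 : 0 < - F x by rewrite oppr_gt0.
have [M HM] := mcdf_lo_abs hF e0.
have t1 : Order.min (M - 1) x < M by rewrite gt_min ltrBlDr ltrDl ltr01.
have := HM _ t1; rewrite ltr_norml => /andP[+ _]; rewrite opprK ltNge.
by rewrite mcdf_mono // ge_min lexx orbT.
Qed.

Lemma mcdf_le1 F x : is_cdf F -> F x <= 1.
Proof.
move=> hF; rewrite leNgt; apply/negP => Fx1.
have e0 : 0 < F x - 1 by rewrite subr_gt0.
have [M HM] := mcdf_hi_abs hF e0.
have t1 : M < Order.max (M + 1) x by rewrite lt_max ltrDl ltr01.
have := HM _ t1; rewrite ltr_norml => /andP[+ _]; rewrite opprB ltrD2l ltrN2 ltNge.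
by rewrite mcdf_mono // le_max lexx orbT.
Qed.

Lemma mcdf_lo F e : is_cdf F -> 0 < e -> exists M, forall t, t < M -> F t < e.
Proof.
move=> hF e0; have [M HM] := mcdf_lo_abs hF e0; exists M => t /HM.
by rewrite ger0_norm // mcdf_ge0.
Qed.

Lemma mcdf_hi F e : is_cdf F -> 0 < e -> exists M, forall t, M < t -> 1 - e < F t.
Proof.
move=> hF e0; have [M HM] := mcdf_hi_abs hF e0; exists M => t /HM.
by rewrite ger0_norm ?subr_ge0 ?mcdf_le1 // ltrBlDr -ltrBlDl.
Qed.

Lemma mcdf_rc F x e : is_cdf F -> 0 < e ->
  exists2 d, 0 < d & forall y, x < y < x + d -> F y < F x + e.
Proof.
move=> [_ [h _]] e0; move: (h x) => /cvgr_dist_lt/(_ _ e0) /near_right_ex [d d0 H].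
exists d => // y /H; rewrite ltr_norml => /andP[+ _].
by rewrite ltrBrDl -ltrBrDr opprK addrC.
Qed.
End S.

Section S.
Set Implicit Arguments. Unset Strict Implicit.
Local Open Scope classical_set_scope.
Local Open Scope ring_scope.
Variable R : realType.
Implicit Types F G u : R -> R.

Lemma Tu_empty u F y : (forall t, ~ u t <= y) -> Tu u F y = 0.
Proof. by move=> h; rewrite /Tu; case: pselect => // -[t ut]; case: (h t). Qed.

Lemma Tu_ge u F y t : is_cdf F -> u t <= y -> F t <= Tu u F y.
Proof.
move=> hF ut; rewrite /Tu; case: pselect => [ne|[]]; last by exists t.
apply: ub_le_sup; last by exists t.
by exists 1 => _ [s _ <-]; have := mcdf_le1 s hF.
Qed.

Lemma Tu_le u F y b : (forall t, u t <= y -> F t <= b) -> 0 <= b -> Tu u F y <= b.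
Proof.
move=> h b0; rewrite /Tu; case: pselect => // -[t ut].
by apply: ge_sup; [exists (F t), t|move=> _ [s /h + <-]].
Qed.

Lemma Tu_ge0 u F y : is_cdf F -> 0 <= Tu u F y.
Proof.
move=> hF; case: (pselect (exists t, u t <= y)) => [[t ut]|h].
  exact: le_trans (mcdf_ge0 t hF) (Tu_ge hF ut).
by rewrite Tu_empty // => t ut; apply: h; exists t.
Qed.

Lemma Tu_le1 u F y : is_cdf F -> Tu u F y <= 1.
Proof. by move=> hF; apply: Tu_le => // t _; apply: mcdf_le1. Qed.

Lemma Tu_all u F y : is_cdf F -> (forall t, u t <= y) -> Tu u F y = 1.
Proof.
move=> hF h; apply/le_anti; rewrite Tu_le1 //=; rewrite leNgt; apply/negP => lt1.
have e0 : 0 < 1 - Tu u F y by rewrite subr_gt0.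
have [M HM] := mcdf_hi hF e0.
have := HM (M + 1); rewrite ltrDl ltr01 => /(_ isT); rewrite opprB addrC subrK.
by rewrite ltNge Tu_ge.
Qed.

Lemma Tu_max u F y a : is_cdf F -> (forall t, u t <= y <-> t <= a) -> Tu u F y = F a.
Proof.
move=> hF h; have ha : F a <= Tu u F y by apply: Tu_ge hF _; apply/h.
apply/le_anti; rewrite ha andbT; apply: Tu_le => [t /h ta|].
  exact: mcdf_mono.
exact: mcdf_ge0.
Qed.

End S.

Section S.
Set Implicit Arguments. Unset Strict Implicit.
Local Open Scope classical_set_scope.
Local Open Scope ring_scope.
Variable R : realType.
Implicit Types F G u : R -> R.

Lemma u_struct u y : incr_leftcont u ->
  (forall t, ~ u t <= y) \/ (forall t, u t <= y) \/
  exists a, forall t, u t <= y <-> t <= a.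
Proof.
move=> [um ul].
case: (pselect (exists t, u t <= y)) => [[t0 ut0]|h]; last first.
  by left => t ut; apply: h; exists t.
case: (pselect (exists t, ~ u t <= y)) => [[t1 ut1]|h]; last first.
  by right; left => t; apply: contrapT => nt; apply: h; exists t.
right; right; set S := [set t | u t <= y].
have ub : ubound S t1.
  move=> t /= ut; rewrite leNgt; apply/negP => t1t; apply: ut1.
  exact: le_trans (um _ _ (ltW t1t)) ut.
have S0 : S !=set0 by exists t0.
have lt_in t : t < sup S -> u t <= y.
  move=> /(sup_gt S0) [s Ss ts]; exact: le_trans (um _ _ (ltW ts)) Ss.
exists (sup S) => t; split.
  by move=> ut; apply: ub_le_sup => //; exists t1.
rewrite le_eqVlt => /orP[/eqP ->|/lt_in //].
rewrite leNgt; apply/negP => yu.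
have e0 : 0 < u (sup S) - y by rewrite subr_gt0.
move: (ul (sup S)) => /cvgr_dist_lt/(_ _ e0) /near_left_ex [d d0 H].
have hs : sup S - d / 2 < sup S by rewrite ltrBlDr ltrDl divr_gt0.
have := H (sup S - d / 2); rewrite hs andbT ltrD2l ltrN2 ltr_pdivrMr // ltr_pMr // ltr1n.
move=> /(_ isT); rewrite ltr_norml => /andP[_].
rewrite ltrD2l ltrN2; have := lt_in _ hs; rewrite leNgt => /negP; exact.
Qed.

End S.

Section S.
Set Implicit Arguments. Unset Strict Implicit.
Local Open Scope classical_set_scope.
Local Open Scope ring_scope.
Variable R : realType.
Implicit Types F G u : R -> R.

Lemma Tu_le_ut u F y t : {homo u : x y / x <= y} -> is_cdf F -> y < u t ->
  Tu u F y <= F t.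
Proof.
move=> um hF yu; apply: Tu_le; last exact: mcdf_ge0.
move=> s us; apply: mcdf_mono => //; rewrite leNgt; apply/negP => ts.
by have := le_trans (um _ _ (ltW ts)) us; rewrite leNgt yu.
Qed.

Lemma Tu_mono u F x y : is_cdf F -> x <= y -> Tu u F x <= Tu u F y.
Proof.
move=> hF xy; apply: Tu_le; last exact: Tu_ge0.
by move=> t ut; apply: Tu_ge hF (le_trans ut xy).
Qed.

Lemma Tu_cdf u F : incr_leftcont u -> is_cdf F -> is_cdf (Tu u F).
Proof.
move=> hu hF; have um := hu.1; split; first by move=> x y; apply: Tu_mono.
split.
  move=> x; apply/cvgrPdist_lt => e e0.
  have rc t : x < u t -> F t < Tu u F x + e ->
      \forall y \near x^'+, `|Tu u F x - Tu u F y| < e.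
    move=> xu Ft; near=> y.
    have h1 : Tu u F x <= Tu u F y by apply: Tu_mono => //; apply: ltW; near: y; exact: nbhs_right_gt.
    have h2 : Tu u F y <= F t by apply: Tu_le_ut => //; near: y; exact: nbhs_right_lt.
    rewrite ler0_norm ?subr_le0 // opprB ltrBlDl.
    exact: le_lt_trans h2 Ft.
  case: (u_struct x hu) => [hE|[hA|[a ha]]].
  - have [M HM] := mcdf_lo hF e0.
    apply: (rc (M - 1)); first by rewrite ltNge; apply/negP/hE.
    by rewrite Tu_empty // add0r HM // ltrBlDr ltrDl.
  - near=> y; rewrite !Tu_all ?subrr ?normr0 // => t.
    apply: le_trans (hA t) _; apply: ltW; near: y; exact: nbhs_right_gt.
  - have [d d0 Hd] := mcdf_rc a hF e0.
    have hat : a < a + d / 2 by rewrite ltrDl divr_gt0.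
    apply: (rc (a + d / 2)).
      by rewrite ltNge; apply/negP => /ha; rewrite leNgt hat.
    rewrite (Tu_max hF ha); apply: Hd; rewrite hat /= ltrD2l.
    by rewrite ltr_pdivrMr // ltr_pMr // ltr1n.
split.
  apply/cvgrPdist_lt => e e0; have [M HM] := mcdf_lo hF e0.
  near=> y; rewrite sub0r normrN ger0_norm ?Tu_ge0 //.
  apply: le_lt_trans (HM (M - 1) _); last by rewrite ltrBlDr ltrDl.
  apply: Tu_le_ut => //; near: y; apply: nbhs_ninfty_lt; exact: num_real.
apply/cvgrPdist_lt => e e0; have [M HM] := mcdf_hi hF e0.
near=> y; rewrite ger0_norm ?subr_ge0 ?Tu_le1 // ltrBlDr -ltrBlDl.
apply: lt_le_trans (HM (M + 1) _) _; first by rewrite ltrDl.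
apply: Tu_ge => //; apply: ltW; near: y; apply: nbhs_pinfty_gt; exact: num_real.
Unshelve. all: by end_near.
Qed.

End S.

Section S.
Set Implicit Arguments. Unset Strict Implicit.
Local Open Scope classical_set_scope.
Local Open Scope ring_scope.
Variable R : realType.
Implicit Types F G u d : R -> R.

Lemma in01 (x : R) : (x \in `[0, 1]) = (0 <= x <= 1).
Proof. by rewrite in_itv. Qed.

Lemma dF_rc d F x : in_FDhat d -> rightcont01 d -> is_cdf F ->
  d (F y) @[y --> x^'+] --> d (F x).
Proof.
move=> hd hdr hF; apply/cvgrPdist_lt => e e0.
have F0 := mcdf_ge0 x hF; have F1 := mcdf_le1 x hF.
have [Fx1|] := ltP (F x) 1; last first.
  move=> F1'; have Fx : F x = 1 by apply/le_anti; rewrite F1 F1'.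
  near=> y; suff -> : F y = F x by rewrite subrr normr0.
  apply/le_anti/andP; split; first by rewrite Fx; apply: mcdf_le1.
  apply: mcdf_mono => //.
move: (hdr (F x)); rewrite F0 Fx1 => /(_ isT) /cvgr_dist_lt/(_ _ e0).
move=> /near_right_ex [d1 d10 H1].
have [d2 d20 H2] := mcdf_rc x hF d10.
near=> y.
have xy : x < y by near: y; exact: nbhs_right_gt.
have yx : y < x + d2 by near: y; apply: nbhs_right_lt; rewrite ltrDl.
have := mcdf_mono hF (ltW xy); rewrite le_eqVlt => /orP[/eqP <-|Fxy].
  by rewrite subrr normr0.
by apply: H1; rewrite Fxy /= H2 // xy yx.
Unshelve. all: by end_near.
Qed.

Lemma dF_mono d F x y : in_FDhat d -> is_cdf F -> x <= y -> d (F x) <= d (F y).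
Proof.
move=> [hm _] hF xy; apply: hm; last exact: mcdf_mono.
  by rewrite in01 (mcdf_ge0 x hF) (mcdf_le1 x hF).
by rewrite in01 (mcdf_ge0 y hF) (mcdf_le1 y hF).
Qed.

Lemma dF_cdf d F : in_FDhat d -> rightcont01 d -> is_cdf F -> is_cdf (d \o F).
Proof.
move=> hd hdr hF; split; first by move=> x y xy; exact: (dF_mono hd hF xy).
split; first by move=> x; move: (dF_rc (x:=x) hd hdr hF).
have [_ [_ [d0 [dl0 [d1 dl1]]]]] := hd.
split.
  apply/cvgrPdist_lt => e e0.
  move: dl0 => /cvgr_dist_lt/(_ _ e0) /near_right_ex [d1' d10 H1].
  have [M HM] := mcdf_lo hF d10.
  near=> y; have yM : y < M by near: y; apply: nbhs_ninfty_lt; exact: num_real.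
  rewrite /=; have := mcdf_ge0 y hF; rewrite le_eqVlt => /orP[/eqP <-|Fy].
    by rewrite /= d0 subrr normr0.
  by apply: H1; rewrite Fy /= add0r HM.
apply/cvgrPdist_lt => e e0.
move: dl1 => /cvgr_dist_lt/(_ _ e0) /near_left_ex [d1' d10 H1].
have [M HM] := mcdf_hi hF d10.
near=> y; have yM : M < y by near: y; apply: nbhs_pinfty_gt; exact: num_real.
rewrite /=; have := mcdf_le1 y hF; rewrite le_eqVlt => /orP[/eqP ->|Fy].
  by rewrite /= d1 subrr normr0.
by apply: H1; rewrite Fy HM.
Unshelve. all: by end_near.
Qed.

Lemma Td_eq d F : in_FDhat d -> rightcont01 d -> is_cdf F -> Td d F = d \o F.
Proof.
move=> hd hdr hF; apply/funext => x; rewrite /Td /=.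
by apply: cvg_lim => //; apply: dF_rc.
Qed.

Lemma Td_cdf d F : in_FDhat d -> rightcont01 d -> is_cdf F -> is_cdf (Td d F).
Proof. by move=> hd hdr hF; rewrite Td_eq //; apply: dF_cdf. Qed.

End S.

Section S.
Set Implicit Arguments. Unset Strict Implicit.
Local Open Scope classical_set_scope.
Local Open Scope ring_scope.
Variable R : realType.
Implicit Types F G u d : R -> R.

Lemma key_comm u d F : incr_leftcont u -> in_FDhat d -> rightcont01 d -> is_cdf F ->
  Tu u (d \o F) = d \o (Tu u F).
Proof.
move=> hu hd hdr hF; have hdF := dF_cdf hd hdr hF.
have [_ [_ [d0 [_ [d1 _]]]]] := hd.
apply/funext => x /=; case: (u_struct x hu) => [hE|[hA|[a ha]]].
- by rewrite !Tu_empty.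
- by rewrite !Tu_all.
- by rewrite (Tu_max hF ha) (Tu_max hdF ha).
Qed.

Lemma dir_i_back (T : (R -> R) -> (R -> R)) d :
  in_FDhat d -> rightcont01 d -> (forall F, is_cdf F -> T F = Td d F) ->
  forall u, incr_leftcont u -> forall F, is_cdf F -> T (Tu u F) = Tu u (T F).
Proof.
move=> hd hdr hT u hu F hF.
have hTF := Tu_cdf hu hF.
rewrite (hT _ hTF) (hT _ hF) (Td_eq hd hdr hTF) (Td_eq hd hdr hF).
by rewrite key_comm.
Qed.

Lemma dir_ii_back (T : (R -> R) -> (R -> R)) u :
  incr_leftcont u -> (forall F, is_cdf F -> T F = Tu u F) ->
  forall d, in_FDhat d -> rightcont01 d ->
  forall F, is_cdf F -> T (Td d F) = Td d (T F).
Proof.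
move=> hu hT d hd hdr F hF.
have hTF := Td_cdf hd hdr hF; have hTu := Tu_cdf hu hF.
rewrite (hT _ hTF) (hT _ hF) (Td_eq hd hdr hTu) (Td_eq hd hdr hF).
by rewrite key_comm.
Qed.

End S.

Section S.
Set Implicit Arguments. Unset Strict Implicit.
Local Open Scope classical_set_scope.
Local Open Scope ring_scope.
Variable R : realType.
Implicit Types F G u d : R -> R.

Lemma near_cst_cvg {T} (FF : set_system T) {FFF : Filter FF} (f : T -> R) (l : R) :
  (\forall y \near FF, f y = l) -> f y @[y --> FF] --> l.
Proof.
move=> h; apply/cvgrPdist_lt => e e0; near=> y.
suff -> : f y = l by rewrite subrr normr0.
near: y; exact: h.
Unshelve. all: by end_near.
Qed.

Definition U (a b : R) (x : R) : R :=
  if x < a then 0 else if x < a + b then (x - a) / b else 1.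

Lemma U_lt a b x : x < a -> U a b x = 0.
Proof. by rewrite /U => ->. Qed.
Lemma U_mid a b x : a <= x -> x < a + b -> U a b x = (x - a) / b.
Proof. by rewrite /U => xa xb; rewrite ifF ?xb //; apply/negbTE; rewrite -leNgt. Qed.
Lemma U_ge a b x : 0 < b -> a + b <= x -> U a b x = 1.
Proof.
move=> b0 xb; rewrite /U ifF; last by apply/negbTE; rewrite -leNgt; lra.
by rewrite ifF //; apply/negbTE; rewrite -leNgt.
Qed.

Lemma U_cdf a b : 0 < b -> is_cdf (U a b).
Proof.
move=> b0; split.
  move=> x y xy; rewrite /U.
  case: (ltP x a) => xa; case: (ltP y a) => ya; case: (ltP x (a + b)) => xb;
    case: (ltP y (a + b)) => yb; try lra.
  - by apply: divr_ge0; lra.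
  - by rewrite ler_pM2r ?invr_gt0 //; lra.
  - by rewrite ler_pdivrMr //; lra.
split.
  move=> x; case: (ltP x a) => xa.
    rewrite U_lt //; apply: near_cst_cvg; near=> y; apply: U_lt; near: y; exact: nbhs_right_lt.
  case: (ltP x (a + b)) => xb; last first.
    rewrite U_ge //; apply: near_cst_cvg; near=> y; apply: U_ge => //.
    apply: le_trans xb _; apply: ltW; near: y; exact: nbhs_right_gt.
  rewrite U_mid //.
  apply/cvgrPdist_lt => e e0; near=> y.
  have xy : x < y by near: y; exact: nbhs_right_gt.
  have yb : y < a + b by near: y; exact: nbhs_right_lt.
  have ye : y - x < e * b by near: y; apply: nbhs_right_ltDr; exact: mulr_gt0.
  rewrite U_mid; [|lra|lra].
  rewrite -mulrBl ler0_norm; last first.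
    by apply: mulr_le0_ge0; [lra|]; rewrite invr_ge0; lra.
  rewrite -mulNr ltr_pdivrMr //; lra.
split.
  apply: near_cst_cvg; near=> y; apply: U_lt; near: y; apply: nbhs_ninfty_lt; exact: num_real.
apply: near_cst_cvg; near=> y; apply: U_ge => //.
Unshelve. all: by end_near.
Qed.

End S.

Section S.
Set Implicit Arguments. Unset Strict Implicit.
Local Open Scope classical_set_scope.
Local Open Scope ring_scope.
Variable R : realType.
Implicit Types F G u d : R -> R.

Definition Gs (s : R) (x : R) : R := if x < 0 then 0 else if x < 1 then s else 1.

Lemma Gs_cdf s : 0 <= s <= 1 -> is_cdf (Gs s).
Proof.
move=> /andP[s0 s1]; split.
  move=> x y xy; rewrite /Gs.
  by case: (ltP x 0) => xa; case: (ltP y 0) => ya; case: (ltP x 1) => xb;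
    case: (ltP y 1) => yb; try lra.
split.
  move=> x; apply: near_cst_cvg; rewrite /Gs; case: (ltP x 0) => x0.
    near=> y; rewrite ifT //; near: y; exact: nbhs_right_lt.
  have h0 : \forall y \near x^'+, 0 <= y.
    near=> y; apply: le_trans x0 _; apply: ltW; near: y; exact: nbhs_right_gt.
  case: (ltP x 1) => x1.
    near=> y; rewrite ifF; last by apply/negbTE; rewrite -leNgt; near: y.
    rewrite ifT //; near: y; exact: nbhs_right_lt.
  near=> y; rewrite ifF; last by apply/negbTE; rewrite -leNgt; near: y.
  rewrite ifF //; apply/negbTE; rewrite -leNgt; apply: le_trans x1 _; apply: ltW.
  near: y; exact: nbhs_right_gt.
split.
  apply: near_cst_cvg; near=> y; rewrite /Gs ifT //; near: y; apply: nbhs_ninfty_lt; exact: num_real.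
apply: near_cst_cvg; near=> y.
have y1 : 1 < y by near: y; apply: nbhs_pinfty_gt; exact: num_real.
rewrite /Gs ifF; last by apply/negbTE; rewrite -leNgt; lra.
by rewrite ifF //; apply/negbTE; rewrite -leNgt; lra.
Unshelve. all: by end_near.
Qed.

Definition diracF (c : R) (x : R) : R := if c <= x then 1 else 0.

Lemma diracF_cdf c : is_cdf (diracF c).
Proof.
split.
  move=> x y xy; rewrite /diracF.
  by case: (leP c x) => xa; case: (leP c y) => ya; try lra.
split.
  move=> x; apply: near_cst_cvg; rewrite /diracF; case: (leP c x) => xc.
    near=> y; rewrite ifT //; apply: le_trans xc _; apply: ltW; near: y; exact: nbhs_right_gt.
  near=> y; rewrite ifF //; apply/negbTE; rewrite -ltNge; near: y; exact: nbhs_right_lt.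
split.
  apply: near_cst_cvg; near=> y; rewrite /diracF ifF //; apply/negbTE; rewrite -ltNge.
  near: y; apply: nbhs_ninfty_lt; exact: num_real.
apply: near_cst_cvg; near=> y; rewrite /diracF ifT //; apply: ltW.
Unshelve. all: by end_near.
Qed.

Definition F1 (x : R) : R := if x < 0 then 0 else x / (1 + x).

Lemma F1_cdf : is_cdf F1.
Proof.
split.
  move=> x y xy; rewrite /F1.
  case: (ltP x 0) => x0; case: (ltP y 0) => y0; try lra.
    by apply: divr_ge0; lra.
  rewrite ler_pdivrMr; last lra.
  rewrite mulrAC ler_pdivlMr; last lra.
  nra.
split.
  move=> x; rewrite /F1; case: (ltP x 0) => x0.
    apply: near_cst_cvg; near=> y; rewrite ifT //; near: y; exact: nbhs_right_lt.
  apply/cvgrPdist_lt => e e0; near=> y.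
  have xy : x < y by near: y; exact: nbhs_right_gt.
  have ye : y - x < e by near: y; apply: nbhs_right_ltDr.
  rewrite ifF; last by apply/negbTE; rewrite -leNgt; lra.
  have -> : x / (1 + x) - y / (1 + y) = (x - y) / ((1 + x) * (1 + y)).
    by field; apply/andP; split; apply/negP => /eqP; lra.
  have hp : 0 < (1 + x) * (1 + y) by apply: mulr_gt0; lra.
  rewrite normrM normfV (ler0_norm (x := x - y)); last lra.
  rewrite (gtr0_norm hp) ltr_pdivrMr //.
  have hp1 : 1 <= (1 + x) * (1 + y) by nra.
  have := ler_wpM2l (ltW e0) hp1; rewrite mulr1; lra.
split.
  apply: near_cst_cvg; near=> y; rewrite /F1 ifT //; near: y; apply: nbhs_ninfty_lt; exact: num_real.
apply/cvgrPdist_lt => e e0; near=> y.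
have y1 : e^-1 < y by near: y; apply: nbhs_pinfty_gt; exact: num_real.
have y0 : 0 < y by apply: lt_trans y1; rewrite invr_gt0.
rewrite /F1 ifF; last by apply/negbTE; rewrite -leNgt; lra.
have -> : 1 - y / (1 + y) = (1 + y)^-1 by field; apply/negP => /eqP; lra.
rewrite ger0_norm; last by rewrite invr_ge0; lra.
rewrite -(invrK e) ltf_pV2 ?posrE; [lra|lra|by rewrite invr_gt0].
Unshelve. all: by end_near.
Qed.

End S.

Section S.
Set Implicit Arguments. Unset Strict Implicit.
Local Open Scope classical_set_scope.
Local Open Scope ring_scope.
Variable R : realType.
Implicit Types F G u d : R -> R.

Lemma cvg_near_eq {T} (FF : set_system T) {FFF : Filter FF} (f g : T -> R) (l : R) :
  (\forall y \near FF, f y = g y) -> g y @[y --> FF] --> l -> f y @[y --> FF] --> l.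
Proof.
move=> h /cvgrPdist_lt hg; apply/cvgrPdist_lt => e e0; near=> y.
have -> : f y = g y by near: y; exact: h.
near: y; exact: hg.
Unshelve. all: by end_near.
Qed.

Definition ux (x : R) (t : R) : R := if t <= x then 0 else 1.

Lemma ux_ilc x : incr_leftcont (ux x).
Proof.
split.
  move=> s t st; rewrite /ux.
  by case: (leP s x) => sx; case: (leP t x) => tx; lra.
move=> t; apply: near_cst_cvg; rewrite /ux; case: (leP t x) => tx.
  near=> y; rewrite ifT //; apply: le_trans tx; apply: ltW; near: y; exact: nbhs_left_lt.
near=> y; rewrite ifF //; apply/negbTE; rewrite -ltNge; near: y; exact: nbhs_left_gt.
Unshelve. all: by end_near.
Qed.

Lemma Tu_ux x F : is_cdf F -> Tu (ux x) F = Gs (F x).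
Proof.
move=> hF; apply/funext => y; rewrite /Gs.
case: (ltP y 0) => y0.
  by apply: Tu_empty => t; rewrite /ux; case: ifP => _; lra.
case: (ltP y 1) => y1.
  apply: Tu_max => // t; rewrite /ux; case: ifP => tx; split => //; lra.
by apply: Tu_all => // t; rewrite /ux; case: ifP => _; lra.
Qed.

End S.

Section S.
Set Implicit Arguments. Unset Strict Implicit.
Local Open Scope classical_set_scope.
Local Open Scope ring_scope.
Variable R : realType.
Implicit Types F G u d : R -> R.

Lemma dir_i_fwd (T : (R -> R) -> (R -> R)) :
  (forall F, is_cdf F -> is_cdf (T F)) ->
  (forall u, incr_leftcont u -> forall F, is_cdf F -> T (Tu u F) = Tu u (T F)) ->
  exists d, in_FDhat d /\ rightcont01 d /\ forall F, is_cdf F -> T F = Td d F.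
Proof.
move=> hT H; pose d s := T (Gs s) 0.
have hTF F x : is_cdf F -> T F x = d (F x).
  move=> hF; have := H (ux x) (ux_ilc x) F hF.
  rewrite Tu_ux // Tu_ux; last exact: hT.
  by rewrite /d => ->; rewrite /Gs ltxx ltr01.
pose F0 := U (0 : R) 1; have hF0 : is_cdf F0 by apply: U_cdf.
have hT0 := hT _ hF0.
have dT0 s : 0 <= s <= 1 -> d s = T F0 s.
  move=> /andP[s0 s1]; rewrite hTF //; congr d.
  rewrite /F0; case: (ltP s 1) => s1'.
    by rewrite U_mid ?add0r // subr0 divr1.
  by rewrite U_ge // ?add0r //; apply/le_anti; rewrite s1 s1'.
have dval s : 0 <= s <= 1 -> 0 <= d s <= 1.
  by move=> hs; rewrite dT0 // mcdf_ge0 // mcdf_le1.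
have d00 : d 0 = 0.
  apply/le_anti; rewrite (andP (dval 0 _)).1 ?lexx ?ler01 // andbT.
  rewrite leNgt; apply/negP => d0.
  have [M HM] := mcdf_lo hT0 d0.
  have := HM (Order.min (M - 1) (-1)); rewrite gt_min ltrBlDr ltrDl ltr01 => /(_ isT).
  rewrite hTF // /F0 U_lt ?ltxx //.
  by rewrite gt_min ltrN10 orbT.
have d11 : d 1 = 1.
  apply/le_anti; rewrite (andP (dval 1 _)).2 ?lexx ?ler01 //=.
  rewrite leNgt; apply/negP => d1.
  have e0 : 0 < 1 - d 1 by rewrite subr_gt0.
  have [M HM] := mcdf_hi hT0 e0.
  have := HM (Order.max (M + 1) 1); rewrite lt_max ltrDl ltr01 => /(_ isT).
  rewrite hTF // /F0 U_ge ?add0r ?le_max ?lexx ?orbT //.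
  by rewrite opprB addrC subrK ltxx.
have rc x : 0 <= x < 1 -> d y @[y --> x^'+] --> d x.
  move=> /andP[x0 x1]; rewrite dT0 ?x0 ?(ltW x1) //.
  apply: cvg_near_eq (hT0.2.1 x); near=> y; apply: dT0.
  have xy : x < y by near: y; exact: nbhs_right_gt.
  have y1 : y < 1 by near: y; exact: nbhs_right_lt.
  apply/andP; split; lra.
have hdr : rightcont01 d by exact: rc.
have hd : in_FDhat d.
  split.
    move=> x y; rewrite !in01 => /andP[x0 x1] /andP[y0 y1] xy.
    rewrite !dT0 ?x0 ?x1 ?y0 ?y1 //; exact: mcdf_mono.
  split; first by move=> x; rewrite !in01; apply: dval.
  split => //; split.
    by move: (rc 0); rewrite lexx ltr01 d00 => /(_ isT).
  split => //.
  apply/cvgrPdist_lt => e e0; have [M HM] := mcdf_hi (hT _ (@F1_cdf R)) e0.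
  pose M' := Order.max M 0.
  have M'0 : 0 <= M' by rewrite le_max lexx orbT.
  have M'M : M <= M' by rewrite le_max lexx.
  have M'1 : M' / (1 + M') < 1 by rewrite ltr_pdivrMr ?mul1r; lra.
  near=> y.
  have y1 : y < 1 by near: y; exact: nbhs_left_lt.
  have yM : M' / (1 + M') < y by near: y; exact: nbhs_left_gt.
  have y0 : 0 < y by apply: le_lt_trans yM; apply: divr_ge0; lra.
  have hy : d y = T (@F1 R) (y / (1 - y)).
    rewrite hTF; last exact: (@F1_cdf R).
    congr d; rewrite /F1 ifF; last first.
      apply/negbTE; rewrite -leNgt; apply: divr_ge0; lra.
    by field; apply/andP; split; apply/negP => /eqP; lra.
  have tM : M < y / (1 - y).
    apply: le_lt_trans M'M _; rewrite ltr_pdivlMr; last lra.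
    move: yM; rewrite ltr_pdivrMr; lra.
  have := HM _ tM; rewrite hy ger0_norm ?subr_ge0 ?mcdf_le1 //; last exact: hT (@F1_cdf R).
  lra.
exists d; split => //; split => // F hF; rewrite Td_eq //.
by apply/funext => x; rewrite hTF.
Unshelve. all: by end_near.
Qed.

End S.

Section S.
Set Implicit Arguments. Unset Strict Implicit.
Local Open Scope classical_set_scope.
Local Open Scope ring_scope.
Variable R : realType.
Implicit Types F G u d : R -> R.

Lemma diracF_FD (p : R) : 0 < p < 1 -> in_FDhat (diracF p) /\ rightcont01 (diracF p).
Proof.
move=> /andP[p0 p1]; have hc := diracF_cdf p.
split; last by move=> x _; exact: hc.2.1.
split; first by move=> x y _ _; exact: mcdf_mono.
split; first by move=> x _; rewrite in01 /diracF; case: ifP => _; rewrite ?lexx ?ler01.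
split; first by rewrite /diracF ifF //; apply/negbTE; rewrite -ltNge.
split.
  apply: near_cst_cvg; near=> y; rewrite /diracF ifF //; apply/negbTE; rewrite -ltNge.
  near: y; exact: nbhs_right_lt.
split; first by rewrite /diracF ifT //; exact: ltW.
apply: near_cst_cvg; near=> y; rewrite /diracF ifT //; apply: ltW.
near: y; exact: nbhs_left_gt.
Unshelve. all: by end_near.
Qed.

Lemma diracF_char (H : R -> R) : is_cdf H -> (forall x, H x = 0 \/ H x = 1) ->
  exists q, H = diracF q.
Proof.
move=> hH h01; set S := [set x | H x = 0].
have h2 : 0 < 1 / 2 :> R by rewrite divr_gt0 ?ltr01 ?ltr0n.
have [M1 HM1] := mcdf_lo hH h2.
have [M2 HM2] := mcdf_hi hH h2.
have Hlo t : H t < 1 / 2 -> H t = 0.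
  by move=> Ht; case: (h01 t) => // Ht1; rewrite Ht1 in Ht; lra.
have Hhi t : 1 - 1 / 2 < H t -> H t = 1.
  by move=> Ht; case: (h01 t) => // Ht1; rewrite Ht1 in Ht; lra.
have S0 : S !=set0 by exists (M1 - 1); apply: Hlo; apply: HM1; rewrite ltrBlDr ltrDl.
have ub : ubound S (M2 + 1).
  move=> t /= Ht; rewrite leNgt; apply/negP => tM.
  have Mt : M2 < t by lra.
  by have := Hhi t (HM2 t Mt); rewrite Ht => /eqP; rewrite eq_sym oner_eq0.
have hs : has_sup S by split => //; exists (M2 + 1).
exists (sup S); apply/funext => x; rewrite /diracF.
case: (ltP x (sup S)) => xs.
  have [s Ss xs'] := sup_gt S0 xs.
  apply/le_anti; rewrite mcdf_ge0 // andbT; rewrite -Ss; exact: mcdf_mono (ltW xs').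
case: (h01 x) => // Hx; exfalso.
rewrite le_eqVlt in xs; case/orP: xs => [/eqP ex|xs].
  have [d d0 Hd] := mcdf_rc x hH h2.
  have h1 : H (x + d / 2) = 1.
    case: (h01 (x + d / 2)) => // H0.
    have : S (x + d / 2) by [].
    move=> /(ub_le_sup hs.2); rewrite -ex leNgt ltrDl divr_gt0 ?ltr0n //.
  have hx2 : x < x + d / 2 < x + d by apply/andP; split; lra.
  have := Hd _ hx2; rewrite h1 Hx; lra.
have := ub_le_sup hs.2 Hx.
by rewrite leNgt xs.
Qed.

End S.

Section S.
Set Implicit Arguments. Unset Strict Implicit.
Local Open Scope classical_set_scope.
Local Open Scope ring_scope.
Variable R : realType.
Implicit Types F G u d : R -> R.

Lemma U_quant (a b p x : R) : 0 < b -> 0 < p < 1 ->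
  (p <= U a b x) = (a + p * b <= x).
Proof.
move=> b0 /andP[p0 p1].
have pb : 0 < p * b by apply: mulr_gt0.
have pb1 : p * b < b by rewrite gtr_pMl.
case: (ltP x a) => xa.
  by rewrite U_lt //; apply/idP/idP; lra.
case: (ltP x (a + b)) => xb.
  by rewrite U_mid // ler_pdivlMr //; apply/idP/idP; lra.
by rewrite U_ge //; apply/idP/idP; lra.
Qed.

End S.

Section S.
Set Implicit Arguments. Unset Strict Implicit.
Local Open Scope classical_set_scope.
Local Open Scope ring_scope.
Variable R : realType.
Implicit Types F G u d : R -> R.

Lemma dir_ii_fwd (T : (R -> R) -> (R -> R)) :
  (forall F, is_cdf F -> is_cdf (T F)) ->
  (forall d, in_FDhat d -> rightcont01 d ->
      forall F, is_cdf F -> T (Td d F) = Td d (T F)) ->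
  exists u, incr_leftcont u /\ forall F, is_cdf F -> T F = Tu u F.
Proof.
move=> hT H.
have comm p F : 0 < p < 1 -> is_cdf F -> T (diracF p \o F) = diracF p \o T F.
  move=> hp hF; have [hd hdr] := diracF_FD hp.
  have := H _ hd hdr F hF; rewrite !Td_eq //; exact: hT.
have h12 : 0 < (1/2 : R) < 1 by apply/andP; split; lra.
have dd (c : R) : diracF (1/2) \o diracF c = diracF c.
  apply/funext => x; rewrite /= /diracF; case: (leP c x) => _.
    by rewrite ifT //; lra.
  by rewrite ifF //; apply/negbTE; rewrite -ltNge; lra.
have ex (c : R) : exists q, T (diracF c) = diracF q.
  apply: diracF_char; first exact: hT (diracF_cdf c).
  move=> x; have := comm _ _ h12 (diracF_cdf c); rewrite dd => ->.
  by rewrite /= /diracF; case: ifP; [right|left].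
pose u (c : R) := xget 0 [set q | T (diracF c) = diracF q].
have hu (c : R) : T (diracF c) = diracF (u c) by exact: (xgetPex 0 (ex c)).
have key F p q : 0 < p < 1 -> is_cdf F -> (forall t, (p <= F t) = (q <= t)) ->
    forall x, (p <= T F x) = (u q <= x).
  move=> hp hF hq x.
  have e : diracF p \o F = diracF q by apply/funext => t; rewrite /= /diracF hq.
  have := comm p F hp hF; rewrite e hu => /(congr1 (fun f => f x)).
  rewrite /= /diracF.
  case: (boolP (u q <= x)) => h1; case: (boolP (p <= T F x)) => h2 //=.
    by move/eqP; rewrite oner_eq0.
  by move/eqP; rewrite eq_sym oner_eq0.
have mono : {homo u : x y / x <= y}.
  move=> c1 c2 c12; set L := c2 - c1 + 2.
  have L0 : 0 < L by rewrite /L; lra.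
  have hF := U_cdf (c1 - 1) L0.
  have hp1 : 0 < 1 / L < 1.
    by apply/andP; split; [rewrite divr_gt0 //|rewrite ltr_pdivrMr // mul1r /L]; lra.
  have hp2 : 0 < (L - 1) / L < 1.
    by apply/andP; split; [rewrite divr_gt0 // /L|rewrite ltr_pdivrMr // mul1r /L]; lra.
  have k1 := key _ _ c1 hp1 hF.
  have k2 := key _ _ c2 hp2 hF.
  have e1 : c1 - 1 + 1 / L * L = c1 by rewrite mul1r mulVf ?subrK //; lra.
  have e2 : c1 - 1 + (L - 1) / L * L = c2.
    by rewrite divfK; [rewrite /L; lra|lra].
  have := k2 (fun t => etrans (U_quant _ t L0 hp2) (congr1 (fun z => z <= t) e2)) (u c2).
  rewrite lexx => h; rewrite -(k1 (fun t => etrans (U_quant _ t L0 hp1) (congr1 (fun z => z <= t) e1))).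
  apply: le_trans h; rewrite ler_pM2r ?invr_gt0 // /L; lra.
have lc (c : R) : u y @[y --> c^'-] --> u c.
  apply/cvgrPdist_lt => e e0.
  have h2 : (0 : R) < 2 by lra.
  have hF := U_cdf (c - 1) h2.
  have kq p : 0 < p < 1 -> forall x, (p <= T (U (c - 1) 2) x) = (u (c - 1 + p * 2) <= x).
    by move=> hp; apply: key => // t; exact: U_quant.
  pose x := u c - e.
  have hx : T (U (c - 1) 2) x < 1/2.
    rewrite ltNge (kq _ h12) (_ : c - 1 + 1/2 * 2 = c); last by rewrite mul1r mulVf ?subrK //; lra.
    by rewrite -ltNge /x; lra.
  have hx0 : 0 <= T (U (c - 1) 2) x by apply: mcdf_ge0; exact: hT.
  pose p := (T (U (c - 1) 2) x + 1/2)/2.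
  have hp : 0 < p < 1 by apply/andP; split; rewrite /p; lra.
  have hq : x < u (c - 1 + p * 2).
    by rewrite ltNge -(kq _ hp) -ltNge /p; lra.
  have qc : c - 1 + p * 2 < c by rewrite /p; lra.
  near=> y.
  have y1 : c - 1 + p * 2 < y by near: y; exact: nbhs_left_gt.
  have y2 : y < c by near: y; exact: nbhs_left_lt.
  have := mono _ _ (ltW y1); have := mono _ _ (ltW y2).
  move=> m2 m1; rewrite ger0_norm; last lra.
  by rewrite /x in hq; lra.
have hu' : incr_leftcont u by split.
exists u; split => // F hF; apply/funext => x.
have hTF := hT F hF.
have eqp p : 0 < p < 1 -> (p <= T F x) = (p <= Tu u F x).
  move=> hp; have [hd hdr] := diracF_FD hp.
  have [q hq] : exists q, diracF p \o F = diracF q.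
    apply: diracF_char; first exact: dF_cdf.
    by move=> t; rewrite /= /diracF; case: ifP; [right|left].
  have hq' t : (p <= F t) = (q <= t).
    have := congr1 (fun f => f t) hq; rewrite /= /diracF.
    case: (boolP (p <= F t)) => h1; case: (boolP (q <= t)) => h2 //=.
      by move/eqP; rewrite oner_eq0.
    by move/eqP; rewrite eq_sym oner_eq0.
  rewrite (key F p q hp hF hq' x).
  case: (boolP (u q <= x)) => uq.
    apply/esym; apply: le_trans (Tu_ge hF uq); by rewrite hq'.
  apply/esym/negbTE; rewrite -ltNge.
  case: (u_struct x hu') => [hE|[hA|[a ha]]].
  - by rewrite Tu_empty //; case/andP: hp.
  - by move: uq; rewrite hA.
  - rewrite (Tu_max hF ha) ltNge hq'; apply/negP => /ha; exact/negP.
have b0 : 0 <= Tu u F x by exact: Tu_ge0.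
have b1 : Tu u F x <= 1 by exact: Tu_le1.
have a0 := mcdf_ge0 x hTF; have a1 := mcdf_le1 x hTF.
apply/le_anti/andP; split.
  rewrite leNgt; apply/negP => lt.
  pose p := (T F x + Tu u F x)/2.
  have hp : 0 < p < 1 by apply/andP; split; rewrite /p; lra.
  have h1 : p <= T F x by rewrite /p; lra.
  have h2 : ~~ (p <= Tu u F x) by rewrite -ltNge /p; lra.
  by rewrite (eqp p hp) (negbTE h2) in h1.
rewrite leNgt; apply/negP => lt.
pose p := (T F x + Tu u F x)/2.
have hp : 0 < p < 1 by apply/andP; split; rewrite /p; lra.
have h1 : p <= Tu u F x by rewrite /p; lra.
have h2 : ~~ (p <= T F x) by rewrite -ltNge /p; lra.
by rewrite -(eqp p hp) (negbTE h2) in h1.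
Unshelve. all: by end_near.
Qed.

End S.

Local Open Scope ring_scope.

Theorem proposition5 (R : realType) (T : (R -> R) -> (R -> R))
    (hT : forall F, is_cdf F -> is_cdf (T F)) :
  ((forall u, incr_leftcont u ->
      forall F, is_cdf F -> T (Tu u F) = Tu u (T F)) <->
   (exists d, in_FDhat d /\ rightcont01 d /\
      forall F, is_cdf F -> T F = Td d F))
  /\
  ((forall d, in_FDhat d -> rightcont01 d ->
      forall F, is_cdf F -> T (Td d F) = Td d (T F)) <->
   (exists u, incr_leftcont u /\
      forall F, is_cdf F -> T F = Tu u F)).
Proof.
split; split.
- by move=> Hc; apply: dir_i_fwd.
- by move=> [d [hd [hdr hTd]]]; apply: dir_i_back hd hdr hTd.
- by move=> Hc; apply: dir_ii_fwd.
- by move=> [u [hu hTu]]; apply: dir_ii_back hu hTu.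
Qed.
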